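(* Let $l\ge0$ and suppose $\tau\in S_n$ has at least $l+1$ runs. Then $$\sum_{\substack{Pr\in\mathcal{P}ref_n\\ \operatorname{diagword}(Pr)=\tau\\ l(Pr)=l}} t^{\operatorname{area}(Pr)}q^{\operatorname{dinv}(Pr)}Q_{\operatorname{ides}(Pr)} = \Bigg(\sum_{\substack{Pr\in\mathcal{P}ref_n\\ \operatorname{diagword}(Pr)=\tau\\ l(Pr)=l}} t^{\operatorname{area}(Pr)}q^{\operatorname{dinv}(Pr)}\Bigg)\cdot\frac{\sum_{\pi\in\operatorname{Yconsec}(\tau)}q^{\operatorname{inv}(\pi)}Q_{\operatorname{ides}(\tau)\cup\operatorname{ides}(\pi)}}{\sum_{\pi\in\operatorname{Yconsec}(\tau)}q^{\operatorname{inv}(\pi)}}.$$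
   Context: Runs of a permutation are its maximal increasing contiguous segments. A preference function on $n$ cars is a map $f:[n]\to[n]$; $\mathcal{P}ref_n$ is the set of them. It is drawn as a labeled lattice path in the $n\times n$ grid: for $j=1,\dots,n$ in turn, the cars in $f^{-1}(j)$ are written in column $j$ in increasing order bottom to top in the lowest unused rows. A car in the cell with lower-left corner $(x,y)$ lies in diagonal $y-x$. The deviation $l(Pr)$ is the maximum over cars of minus their diagonal (always $\ge0$). $\operatorname{area}(Pr)=\sum_c(d(c)+l(Pr))$, $d(c)$ the diagonal of car $c$. $\operatorname{dinv}(Pr)$ = (number of pairs of cars in the same diagonal with the left one smaller) + (number of pairs $b<a$ with $a$ in diagonal $m+1$, $b$ in diagonal $m$, and $b$ in a column strictly right of $a$) + (number of cars in negative diagonals). $\operatorname{diagword}(Pr)$ lists the cars of each nonempty diagonal in increasing order, diagonals from highest to lowest. The word $\sigma(Pr)$ reads the cars from highest to lowest diagonal and, within a diagonal, from right to left. For a permutation $\sigma\in S_n$ in one-line notation, $\operatorname{ides}(\sigma)=\{i\in[n-1]: i+1 \text{ appears to the left of } i \text{ in } \sigma\}$, and $\operatorname{ides}(Pr)=\operatorname{ides}(\sigma(Pr))$; $\operatorname{inv}(\pi)=\#\{i<j:\pi_i>\pi_j\}$. The consecutive blocks of $\tau$ are the parts of the set partition of $[n]$ in which $i$ and $i+1$ are in the same part iff $i$ appears immediately to the left of $i+1$ in $\tau$; $\operatorname{Yconsec}(\tau)\subseteq S_n$ is the Young subgroup of permutations of $[n]$ mapping each consecutive block of $\tau$ to itself.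 For $S\subseteq[n-1]$, $Q_S=\sum x_{a_1}\cdots x_{a_n}$, summed over $a_1\le\dots\le a_n$ (positive integers) with $a_i<a_{i+1}$ whenever $i\in S$ (Gessel's fundamental quasisymmetric function). *)

(* Defs.v *)
From HB Require Import structures.
From mathcomp Require Import all_boot all_order all_algebra all_fingroup.
Set Implicit Arguments. Unset Strict Implicit. Unset Printing Implicit Defensive.
Import GRing.Theory.

(* Conventions: cars 1..n are represented by c : 'I_n (car label = val c + 1);
   a preference function f : [n] -> [n] is f : {ffun 'I_n -> 'I_n}
   (car c+1 prefers column val (f c) + 1). *)

Definition col n (f : {ffun 'I_n -> 'I_n}) (c : 'I_n) : nat := val (f c).

(* 0-based row y of the cell of car c: cars of earlier columns fill the lowest
   rows, then within the column, smaller cars lie lower. *)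
Definition row n (f : {ffun 'I_n -> 'I_n}) (c : 'I_n) : nat :=
  #|[set c' : 'I_n | val (f c') < val (f c)]|
  + #|[set c' : 'I_n | (f c' == f c) && (val c' < val c)]|.

Definition diag n (f : {ffun 'I_n -> 'I_n}) (c : 'I_n) : int :=
  ((row f c)%:Z - (col f c)%:Z)%R.

(* deviation l(Pr) = max over cars of -(diagonal)  (always >= 0) *)
Definition dev n (f : {ffun 'I_n -> 'I_n}) : nat :=
  \max_(c : 'I_n) (col f c - row f c).

(* area = sum_c (d(c) + l); each summand is >= 0 so truncated subtraction is exact *)
Definition area n (f : {ffun 'I_n -> 'I_n}) : nat :=
  \sum_(c : 'I_n) (row f c + dev f - col f c).

Definition dinv n (f : {ffun 'I_n -> 'I_n}) : nat :=
  #|[set p : 'I_n * 'I_n |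
       [&& diag f p.1 == diag f p.2, col f p.1 < col f p.2 & val p.1 < val p.2]]|
  + #|[set p : 'I_n * 'I_n |
       [&& val p.2 < val p.1, diag f p.1 == (diag f p.2 + 1)%R
         & col f p.1 < col f p.2]]|
  + #|[set c : 'I_n | (diag f c < 0)%R]|.

Definition diaglist (n : nat) : seq int := [seq (n%:Z - k%:Z)%R | k <- iota 0 (2 * n).+1].

Definition diagword n (f : {ffun 'I_n -> 'I_n}) : seq 'I_n :=
  flatten [seq [seq c <- enum 'I_n | diag f c == d] | d <- diaglist n].

(* sigma(Pr): diagonals high to low, within a diagonal right to left *)
Definition sigword n (f : {ffun 'I_n -> 'I_n}) : seq 'I_n :=
  flatten [seq sort (fun a b => col f b <= col f a) [seq c <- enum 'I_n | diag f c == d]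
          | d <- diaglist n].

Definition labels n (w : seq 'I_n) : seq nat := [seq (val c).+1 | c <- w].

Definition oneline n (s : 'S_n) : seq 'I_n := [seq s i | i <- enum 'I_n].

Definition ides (w : seq nat) : seq nat :=
  [seq i <- iota 1 (size w).-1 | index i.+1 w < index i w].

Definition nruns (w : seq nat) : nat :=
  count (fun i => (i == 0) || (nth 0 w i < nth 0 w i.-1)) (iota 0 (size w)).

Definition consec (w : seq nat) (i : nat) : bool := index i.+1 w == (index i w).+1.

Definition sameblock (w : seq nat) (i j : nat) : bool :=
  all (consec w) (iota (minn i j) (maxn i j - minn i j)).

Definition Yconsec n (tau : 'S_n) : {set 'S_n} :=
  [set p : 'S_n | [forall c : 'I_n,
     sameblock (labels (oneline tau)) (val c).+1 (val (p c)).+1]].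

Definition invnum n (p : 'S_n) : nat :=
  #|[set ij : 'I_n * 'I_n | (val ij.1 < val ij.2) && (val (p ij.2) < val (p ij.1))]|.

Definition Qadm (n N : nat) (S : seq nat) (a : n.-tuple 'I_N) : bool :=
  all (fun i => let u := nth 0 (map val a) i.-1 in
                let v := nth 0 (map val a) i in
                if i \in S then u < v else u <= v) (iota 1 n.-1).

(* Gessel's fundamental quasisymmetric function Q_S (degree n), evaluated at the
   truncation x_1,...,x_N (x_i = 0 for i > N); S is a set of indices in [n-1]. *)
Definition Qeval (F : comNzRingType) (n N : nat) (S : seq nat) (x : 'I_N -> F) : F :=
  (\sum_(a : n.-tuple 'I_N | Qadm S a) \prod_(i <- a) x i)%R.

(* Main.v *)
Require Import Defs.
From HB Require Import structures.
From mathcomp Require Import all_boot all_order all_algebra all_fingroup.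
From mathcomp Require Import zify.
Set Implicit Arguments. Unset Strict Implicit. Unset Printing Implicit Defensive.
Import GRing.Theory.
Require Import Defs.
Lemma vE m (i : 'I_m) : val i = nat_of_ord i. Proof. by []. Qed.
Ltac vnorm := repeat (match goal with
  | H : context [@isSub.val_subdef _ _ _ _ _] |- _ => rewrite vE in H end); rewrite ?vE.
Ltac mlia := vnorm; lia.
Section Rows.
Variable n : nat.
Implicit Types (f : {ffun 'I_n -> 'I_n}) (a b c : 'I_n).

Definition rterm f a c : nat :=
  (val (f c) < val (f a)) + ((val (f c) == val (f a)) && (val c < val a)).

Lemma rowE f a : row f a = \sum_c rterm f a c.
Proof.
rewrite /row /rterm big_split /= -!sum1dep_card.
congr (_ + _); rewrite big_mkcond; apply: eq_bigr => c _; first by case: ifP.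
by rewrite val_eqE; case: ifP.
Qed.

Lemma sum_lt (F G : 'I_n -> nat) a :
  (forall c, F c <= G c) -> F a < G a -> \sum_c F c < \sum_c G c.
Proof.
move=> H Ha; rewrite (bigD1 a) //= [X in _ < X](bigD1 a) //=.
by rewrite -addSn leq_add // leq_sum.
Qed.

Lemma row_lt_f f a b : val (f a) < val (f b) -> row f a < row f b.
Proof.
move=> h; rewrite !rowE; apply: (@sum_lt _ _ a) => [c|]; rewrite /rterm; lia.
Qed.

Lemma row_eq_f f a b : f a = f b -> val a < val b -> row f a < row f b.
Proof.
move=> /(congr1 val) e h; rewrite !rowE; apply: (@sum_lt _ _ a) => [c|]; rewrite /rterm; lia.
Qed.

Lemma row_ltn f a : row f a < n.
Proof.
have e : \sum_(c : 'I_n) 1 = n by rewrite sum1_card card_ord.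
rewrite -[X in _ < X]e rowE; apply: (@sum_lt _ _ a) => [c|]; rewrite /rterm; lia.
Qed.

Definition rowo f a : 'I_n := Ordinal (row_ltn f a).

Lemma row_cmp f a b : row f a < row f b ->
  (val (f a) < val (f b)) || ((f a == f b) && (val a < val b)).
Proof.
move=> h; case: (ltngtP (val (f a)) (val (f b))) => [//|h2|h2] /=.
  by have := row_lt_f h2; lia.
have e : f a = f b by apply: val_inj.
rewrite e eqxx /=; case: (ltngtP (val a) (val b)) => [//|h3|h3].
  by have := row_eq_f (esym e) h3; lia.
have e2 : a = b by apply: val_inj.
by move: h; rewrite e2 ltnn.
Qed.

Lemma row_eqcol f a b : f a = f b -> a != b -> row f a != row f b.
Proof.
move=> e neq; case: (ltngtP (val a) (val b)) => h.
- by have := row_eq_f e h; lia.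
- by have := row_eq_f (esym e) h; lia.
- by move: neq; rewrite (val_inj h) eqxx.
Qed.

Lemma rowo_inj f : injective (rowo f).
Proof.
move=> a b /(congr1 val) /= e; apply/eqP; apply: contraT => neq.
case: (ltngtP (val (f a)) (val (f b))) => h.
- by have := row_lt_f h; rewrite e ltnn.
- by have := row_lt_f h; rewrite e ltnn.
- have h' : f a = f b by apply: val_inj.
  by have := row_eqcol h' neq; rewrite e eqxx.
Qed.

Lemma row_surj f (y : 'I_n) : exists a, row f a = y.
Proof.
have [g _ fg] := injF_bij (@rowo_inj f).
by exists (g y); have := fg y => /(congr1 val).
Qed.

End Rows.
Lemma index_flatten (T K : eqType) (L : seq K) (ch : K -> seq T) (key : T -> K) x y :
  (forall d z, (z \in ch d) = (key z == d)) -> key x \in L -> key y \in L ->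
  (index x (flatten (map ch L)) < index y (flatten (map ch L))) =
  (index (key x) L < index (key y) L) ||
  ((key x == key y) && (index x (ch (key x)) < index y (ch (key x)))).
Proof.
move=> hch; elim: L => [//|d L IH] /=.
rewrite !inE.
have hx : x \in ch (key x) by rewrite hch.
have hy : y \in ch (key y) by rewrite hch.
rewrite -index_mem in hx; rewrite -index_mem in hy.
rewrite !index_cat !hch.
case: (eqVneq (key x) d) => [ex|nx]; case: (eqVneq (key y) d) => [ey|ny] /= mx my.
- by rewrite ex ey eqxx.
- by move: hx; rewrite ex; lia.
- rewrite ey (negPf nx) andFb; apply/negbTE; move: hy; rewrite ey; lia.
- by rewrite ltn_add2l ltnS IH.
Qed.
Lemma idx_sorted (T : eqType) (r : rel T) s x y :
  {in s & &, transitive r} -> sorted r s -> x \in s -> y \in s -> x != y ->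
  (r x y -> ~~ r y x) ->
  (index x s < index y s) = r x y.
Proof.
move=> tr so xs ys nxy asy; apply/idP/idP => [h|rxy].
  exact: (sorted_ltn_index_in tr so x y xs ys h).
case: (ltngtP (index x s) (index y s)) => // h.
  by have := sorted_ltn_index_in tr so y x ys xs h; move/negP: (asy rxy).
by move: nxy; rewrite -(nth_index x xs) h (nth_index x ys) eqxx.
Qed.

Lemma index_iota0 m k : k < m -> index k (iota 0 m) = k.
Proof.
move=> h; have := @index_uniq _ 0 k (iota 0 m); rewrite size_iota nth_iota // add0n.
by apply => //; exact: iota_uniq.
Qed.

Section DiagIdx.
Variable n : nat.
Implicit Types (f : {ffun 'I_n -> 'I_n}) (a b c x y : 'I_n).

Lemma col_ltn f c : col f c < n.
Proof. by rewrite /col ltn_ord. Qed.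

Lemma diag_eqk f c : diag f c = (fun k : nat => (n%:Z - k%:Z)%R) (n + col f c - row f c).
Proof. by rewrite /diag /=; have := row_ltn f c; have := col_ltn f c; lia. Qed.

Lemma diag_in f c : diag f c \in diaglist n.
Proof.
rewrite /diaglist; apply/mapP; exists (n + col f c - row f c); last exact: diag_eqk.
by rewrite mem_iota; have := row_ltn f c; have := col_ltn f c; lia.
Qed.

Lemma idx_diag f c : index (diag f c) (diaglist n) = n + col f c - row f c.
Proof.
rewrite diag_eqk /diaglist.
rewrite (@index_map _ _ (fun k : nat => (n%:Z - k%:Z)%R) _ _ (n + col f c - row f c)); last by move=> u v /=; lia.
by apply: index_iota0; have := row_ltn f c; have := col_ltn f c; lia.
Qed.

Lemma idx_diag_lt f x y :
  (index (diag f x) (diaglist n) < index (diag f y) (diaglist n)) = (diag f y < diag f x)%R.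
Proof.
rewrite !idx_diag /diag.
have := row_ltn f x; have := col_ltn f x; have := row_ltn f y; have := col_ltn f y; lia.
Qed.

Lemma diag_col_neq f x y : x != y -> diag f x = diag f y -> col f x != col f y.
Proof.
move=> nxy ed; apply/negP => /eqP ec.
have e : f x = f y by apply: val_inj.
have := row_eqcol e nxy; move: ed ec; rewrite /diag /col; lia.
Qed.

Lemma dw_lt f x y : x != y ->
  (index x (diagword f) < index y (diagword f)) =
  (diag f y < diag f x)%R || ((diag f x == diag f y) && (val x < val y)).
Proof.
move=> nxy; rewrite /diagword (@index_flatten _ _ _ _ (diag f)) ?diag_in //; last first.
  by move=> d z; rewrite mem_filter mem_enum andbT.
rewrite idx_diag_lt; congr (_ || _); case: eqP => //= e.
have so : sorted (fun a b : 'I_n => val a < val b) (enum 'I_n).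
  by have := iota_ltn_sorted 0 n; rewrite -val_enum_ord sorted_map.
apply: (@idx_sorted _ (fun a b : 'I_n => val a < val b)) => //.
- by move=> a b c _ _ _; apply: ltn_trans.
- by apply: sorted_filter => // a b c; apply: ltn_trans.
- by rewrite mem_filter mem_enum eqxx.
- by rewrite mem_filter mem_enum e eqxx.
- by move=> h; rewrite -leqNgt ltnW.
Qed.

Lemma sw_lt f x y : x != y ->
  (index x (sigword f) < index y (sigword f)) =
  (diag f y < diag f x)%R || ((diag f x == diag f y) && (col f y < col f x)).
Proof.
move=> nxy; rewrite /sigword (@index_flatten _ _ _ _ (diag f)) ?diag_in //; last first.
  by move=> d z; rewrite mem_sort mem_filter mem_enum andbT.
rewrite idx_diag_lt; congr (_ || _); case: eqP => //= e.
have ne := diag_col_neq nxy e.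
rewrite (@idx_sorted _ (fun a b : 'I_n => col f b <= col f a)).
- by rewrite leq_eqVlt eq_sym (negPf ne).
- by move=> a b c _ _ _ h1 h2; apply: leq_trans h2 h1.
- by apply: sort_sorted => a b; apply: leq_total.
- by rewrite mem_sort mem_filter mem_enum eqxx.
- by rewrite mem_sort mem_filter mem_enum e eqxx.
- by [].
- move=> h; rewrite -ltnNge ltn_neqAle h eq_sym ne //.
Qed.

End DiagIdx.
Section Fiber.
Variables (n : nat) (tau : 'S_n).
Implicit Types (f : {ffun 'I_n -> 'I_n}) (a b c d e u v : 'I_n).

Definition ww := oneline tau.
Definition Kn (k : nat) := consec (labels ww) k.+1.
Definition SB u v := sameblock (labels ww) (val u).+1 (val v).+1.

Lemma w_uniq : uniq ww.
Proof. by rewrite /ww /oneline map_inj_uniq ?enum_uniq //; apply: perm_inj. Qed.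

Lemma w_size : size ww = n.
Proof. by rewrite /ww /oneline size_map size_enum_ord. Qed.

Lemma w_mem c : c \in ww.
Proof. by apply/mapP; exists (tau^-1 c)%g; rewrite ?mem_enum ?permKV. Qed.

Lemma lab_index c : index (val c).+1 (labels ww) = index c ww.
Proof.
rewrite /labels (@index_map _ _ (fun c : 'I_n => (val c).+1)) //.
by move=> u v /eqP; rewrite eqSS => /eqP; apply: val_inj.
Qed.

Lemma K_ord a b : val b = (val a).+1 -> Kn a = (index b ww == (index a ww).+1).
Proof. by move=> e; rewrite /Kn /consec (lab_index a) -e (lab_index b). Qed.

Lemma idx_ltn c : index c ww < n.
Proof. by have := w_mem c; rewrite -index_mem w_size. Qed.

Lemma idx_inj c d : index c ww = index d ww -> c = d.
Proof. by move=> h; rewrite -(nth_index c (w_mem c)) h nth_index ?w_mem. Qed.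

Lemma SBP u v : SB u v <-> (forall k, minn (val u) (val v) <= k < maxn (val u) (val v) -> Kn k).
Proof.
rewrite /SB /sameblock; split.
  move/allP=> h k hk; apply: h; rewrite mem_iota; mlia.
move=> h; apply/allP => m; rewrite mem_iota => hm.
have -> : m = (m.-1).+1 by mlia.
by apply: h; mlia.
Qed.

Section WithF.
Variable f : {ffun 'I_n -> 'I_n}.
Hypothesis hf : diagword f = ww.

Lemma dwl x y : x != y ->
  (index x ww < index y ww) =
  (diag f y < diag f x)%R || ((diag f x == diag f y) && (val x < val y)).
Proof. by rewrite -hf; apply: dw_lt. Qed.

Lemma C2 a b : val b = (val a).+1 -> diag f a = diag f b -> Kn a.
Proof.
move=> eb ed; rewrite (K_ord eb).
have nab : a != b by apply/eqP => h; move: eb; rewrite h; mlia.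
have hab := dwl nab; rewrite ed eqxx eb ltnSn orbT /= in hab.
rewrite eqn_leq hab andbT leqNgt; apply/negP => hp.
set p := (index a ww).+1 in hp.
have pn : p < size ww by have := idx_ltn b; rewrite w_size; mlia.
set e := nth a ww p.
have ie : index e ww = p by apply: index_uniq => //; exact: w_uniq.
have nae : a != e by apply/eqP => h; move: ie; rewrite -h /p; mlia.
have neb : e != b by apply/eqP => h; move: ie hp; rewrite h /p; mlia.
have h1 := dwl nae; have h2 := dwl neb.
rewrite ie /p ltnSn in h1; rewrite ie hp in h2.
move: h1 h2; rewrite ed => /esym h1 /esym h2; mlia.
Qed.

Lemma row_step (P : 'I_n -> Prop) :
  (forall e1 e2, P e1 -> row f e2 = (row f e1).+1 -> P e2) ->
  forall m e1 e2, P e1 -> row f e2 = row f e1 + m -> P e2.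
Proof.
move=> step; elim=> [|m IH] e1 e2 p1 r2.
  by have -> : e2 = e1 by apply: (@rowo_inj _ f); apply: val_inj; rewrite /= r2 addn0.
have hy : row f e1 + m < n by have := row_ltn f e2; mlia.
have [e' he'] := row_surj f (Ordinal hy).
apply: (step e') => //=; first by apply: (IH e1) => //.
by rewrite r2 he' /=; mlia.
Qed.

Lemma C1 a b : val b = (val a).+1 -> Kn a -> diag f a = diag f b.
Proof.
move=> eb; rewrite (K_ord eb) => /eqP hK.
apply/eqP; apply: contraT => hd.
have nab : a != b by apply/eqP => h; move: eb; rewrite h; mlia.
have hab : (diag f b < diag f a)%R.
  by move: (dwl nab); rewrite hK ltnSn (negPf hd) andFb orbF => <-.
have between : forall e, a != e -> e != b ->
    ~~ ((index a ww < index e ww) && (index e ww < index b ww)).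
  by move=> e _ _; rewrite hK; mlia.
pose P := fun e => (diag f e < diag f a)%R.
have step : forall e1 e2, P e1 -> row f e2 = (row f e1).+1 -> P e2.
  move=> e1 e2; rewrite /P => p1 r2.
  have := row_cmp (f := f) (a := e1) (b := e2); rewrite r2 ltnSn => /(_ isT).
  case/orP => [hc|/andP [/eqP fe le]].
    by move: p1 hc; rewrite /diag /col r2; mlia.
  have d2 : diag f e2 = (diag f e1 + 1)%R by rewrite /diag /col r2 fe; mlia.
  rewrite d2; case: (boolP ((diag f e1 + 1) < diag f a)%R) => // hge.
  have d1 : diag f e1 = (diag f a - 1)%R by mlia.
  have d2' : diag f e2 = diag f a by rewrite d2 d1; mlia.
  have le2 : val e2 <= val a.
    rewrite leqNgt; apply/negP => lt.
    have n1 : a != e2 by apply/eqP => h; move: lt; rewrite h ltnn.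
    have n2 : e2 != b by apply/eqP => h; move: d2' hd; rewrite h => ->; rewrite eqxx.
    have := between e2 n1 n2; rewrite (dwl n1) (dwl n2) d2' lt /=; mlia.
  have ge1 : val b <= val e1.
    rewrite leqNgt; apply/negP => lt.
    have n1 : a != e1 by apply/eqP => h; move: d1; rewrite h; mlia.
    have n2 : e1 != b by apply/eqP => h; move: lt; rewrite h ltnn.
    have := between e1 n1 n2; rewrite (dwl n1) (dwl n2) lt d1 /=; mlia.
  by move: le le2 ge1; rewrite eb; mlia.
have n0 : 0 < n by have := ltn_ord a; mlia.
have [e0 he0] := row_surj f (Ordinal n0).
have nN : n.-1 < n by mlia.
have [eN heN] := row_surj f (Ordinal nN).
have d0 : (diag f e0 <= 0)%R by rewrite /diag he0 /=; mlia.
have dN : (0 <= diag f eN)%R by rewrite /diag heN /=; have := col_ltn f eN; mlia.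
case: (boolP (P e0)) => p0.
  have := @row_step P step (row f a) e0 a p0; rewrite he0 /= add0n => /(_ erefl).
  by rewrite /P; mlia.
have pb : P b by rewrite /P; move: hab; mlia.
have := @row_step P step (n.-1 - row f b) b eN pb.
rewrite heN /= => /(_ _).
have := row_ltn f b => hb; rewrite subnKC; last by mlia.
move=> /(_ erefl); rewrite /P; move: p0 d0 dN; rewrite /P; mlia.
Qed.

End WithF.
Lemma SB_refl u : SB u u.
Proof. by apply/SBP => k; mlia. Qed.

Lemma SB_sym u v : SB u v -> SB v u.
Proof. by move/SBP => h; apply/SBP => k hk; apply: h; mlia. Qed.

Lemma SB_trans u v x : SB u v -> SB v x -> SB u x.
Proof.
move=> /SBP h1 /SBP h2; apply/SBP => k hk.
have : (minn (val u) (val v) <= k < maxn (val u) (val v)) ||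
       (minn (val v) (val x) <= k < maxn (val v) (val x)) by mlia.
by case/orP => [/h1|/h2].
Qed.

Lemma SB_lt u v u' v' : ~~ SB u v -> val u < val v -> SB u u' -> SB v v' -> val u' < val v'.
Proof.
move=> nuv luv /SBP h1 /SBP h2; rewrite ltnNge; apply/negP => hle.
move/negP: nuv; apply; apply/SBP => k hk.
case: (ltnP k (val u')) => hk2.
  by apply: h1; mlia.
by apply: h2; mlia.
Qed.

Lemma SB_K a b : val b = (val a).+1 -> Kn a -> SB a b.
Proof. by move=> e h; apply/SBP => k hk; have -> : k = val a by mlia. Qed.

Lemma K_SB a b : val b = (val a).+1 -> SB a b -> Kn a.
Proof. by move=> e /SBP h; apply: h; mlia. Qed.

Lemma SB_diag f : diagword f = ww -> forall u v, SB u v -> diag f u = diag f v.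
Proof.
move=> hf.
have main : forall m u v, val v = val u + m ->
    (forall k, val u <= k < val v -> Kn k) -> diag f u = diag f v.
  elim=> [|m IH] u v e h.
    by have -> : v = u by apply: val_inj; rewrite e addn0.
  have hv : val u + m < n by have := ltn_ord v; mlia.
  rewrite (IH u (Ordinal hv)) //=; last by move=> k hk; apply: h; mlia.
  apply: (C1 hf) => /=; first by mlia.
  by apply: h; mlia.
move=> u v /SBP h.
case: (leqP (val u) (val v)) => huv.
  apply: (main (val v - val u)); first by mlia.
  by move=> k hk; apply: h; mlia.
apply/esym; apply: (main (val u - val v)); first by mlia.
by move=> k hk; apply: h; mlia.
Qed.

Definition GG := Yconsec tau.

Lemma inG s : (s \in GG) = [forall c, SB c (s c)].
Proof. by rewrite inE. Qed.

Lemma G_SB s c : s \in GG -> SB c (s c).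
Proof. by rewrite inG => /forallP. Qed.

Lemma G_SB2 s u v : s \in GG -> SB (s u) (s v) = SB u v.
Proof.
move=> hs; apply/idP/idP => h.
  apply: (SB_trans (G_SB u hs)); apply: (SB_trans h); apply: SB_sym; exact: G_SB.
apply: (SB_trans (SB_sym (G_SB u hs))); apply: (SB_trans h); exact: G_SB.
Qed.

Lemma G1 : (1%g : 'S_n) \in GG.
Proof. by rewrite inG; apply/forallP => c; rewrite perm1 SB_refl. Qed.

Lemma GM s r : s \in GG -> r \in GG -> (s * r)%g \in GG.
Proof.
move=> hs hr; rewrite inG; apply/forallP => c; rewrite permM.
exact: (SB_trans (G_SB c hs) (G_SB (s c) hr)).
Qed.

Lemma GV s : s \in GG -> (s^-1)%g \in GG.
Proof.
move=> hs; rewrite inG; apply/forallP => c.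
by have := G_SB ((s^-1)%g c) hs; rewrite permKV => /SB_sym.
Qed.

Lemma G_tperm a b : val b = (val a).+1 -> Kn a -> tperm a b \in GG.
Proof.
move=> e k; rewrite inG; apply/forallP => c.
case: tpermP => [->|->|_ _]; last exact: SB_refl.
  exact: SB_K.
exact: SB_sym (SB_K e k).
Qed.

Lemma G_lt s u v : s \in GG -> ~~ SB u v -> (val u < val v) = (val (s u) < val (s v)).
Proof.
move=> hs nuv; apply/idP/idP => h.
  exact: SB_lt nuv h (G_SB u hs) (G_SB v hs).
rewrite ltnNge; apply/negP; rewrite leq_eqVlt => /orP [/eqP e|h2].
  have euv : v = u by apply: val_inj.
  by move: nuv; rewrite euv SB_refl.
have nvu : ~~ SB v u by apply/negP => /SB_sym; apply/negP.
have := SB_lt nvu h2 (G_SB v hs) (G_SB u hs); mlia.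
Qed.
Implicit Types (s r : 'S_n) (h g : {ffun 'I_n -> 'I_n}).
Definition act (f : {ffun 'I_n -> 'I_n}) (s : 'S_n) : {ffun 'I_n -> 'I_n} :=
  [ffun c => f (s c)].

Lemma act_col f s c : col (act f s) c = col f (s c).
Proof. by rewrite /col ffunE. Qed.

Lemma diag_SB_neq f : diagword f = ww -> forall u v, SB u v -> u != v -> f u != f v.
Proof.
move=> hf u v h nuv; apply/eqP => e.
by have := diag_col_neq nuv (SB_diag hf h); rewrite /col e eqxx.
Qed.

Lemma act_row f s : diagword f = ww -> s \in GG -> forall c, row (act f s) c = row f (s c).
Proof.
move=> hf hs c; rewrite !rowE [RHS](reindex_inj (@perm_inj _ s)) /=.
apply: eq_bigr => c' _; rewrite /rterm !ffunE.
congr (_ + _); case: eqP => //= e.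
case: (eqVneq c' c) => [->|ncc]; first by rewrite !ltnn.
case: (boolP (SB c' c)) => hsb.
  have : f (s c') != f (s c).
    apply: diag_SB_neq => //; first by rewrite G_SB2.
    by rewrite (inj_eq (@perm_inj _ s)).
  by move=> /eqP ne; exfalso; apply: ne; apply: val_inj; exact: e.
by have := G_lt hs hsb; vnorm => ->.
Qed.

Lemma act_diag f s : diagword f = ww -> s \in GG -> forall c, diag (act f s) c = diag f (s c).
Proof. by move=> hf hs c; rewrite /diag act_col (act_row hf hs). Qed.

Lemma act_dw f s : diagword f = ww -> s \in GG -> diagword (act f s) = diagword f.
Proof.
move=> hf hs; rewrite /diagword; congr flatten; apply: eq_map => d; apply: eq_filter => c.
by rewrite (act_diag hf hs) -(SB_diag hf (G_SB c hs)).
Qed.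

Lemma act_dev f s : diagword f = ww -> s \in GG -> dev (act f s) = dev f.
Proof.
move=> hf hs; rewrite /dev; under eq_bigr => c _ do rewrite act_col (act_row hf hs).
by rewrite [RHS](reindex_inj (@perm_inj _ s)).
Qed.

Lemma act_area f s : diagword f = ww -> s \in GG -> area (act f s) = area f.
Proof.
move=> hf hs; rewrite /area (act_dev hf hs).
under eq_bigr => c _ do rewrite act_col (act_row hf hs).
by rewrite [RHS](reindex_inj (@perm_inj _ s)).
Qed.

Lemma act_comp f s r : act (act f s) r = act f (r * s)%g.
Proof. by apply/ffunP => c; rewrite !ffunE permM. Qed.

Lemma act1 f : act f 1%g = f.
Proof. by apply/ffunP => c; rewrite ffunE perm1. Qed.

Definition canon f := [forall c, forall d, (SB c d && (val c < val d)) ==> (col f d < col f c)].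

Lemma canonP f : canon f -> forall c d, SB c d -> val c < val d -> col f d < col f c.
Proof. by move=> /forallP h c d h1 h2; move/forallP: (h c) => /(_ d); rewrite h1 h2. Qed.

Lemma invnumV s : invnum (s^-1)%g = invnum s.
Proof.
rewrite /invnum.
pose pm := fun p : 'I_n * 'I_n => ((s^-1)%g p.2, (s^-1)%g p.1).
have pmi : injective pm.
  by move=> [a b] [c d] [/perm_inj -> /perm_inj ->].
rewrite -[RHS](card_preimset _ pmi); apply: eq_card => [[a b]].
by rewrite !inE /= !permKV andbC.
Qed.

Lemma dinv_act h s : diagword h = ww -> canon h -> s \in GG ->
  dinv (act h s) = dinv h + invnum s.
Proof.
move=> hf hc hs; rewrite /dinv.
pose pm := fun p : 'I_n * 'I_n => (s p.1, s p.2).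
have pmi : injective pm.
  by move=> [a b] [c d] [/perm_inj -> /perm_inj ->].
have T3 : #|[set c | (diag (act h s) c < 0)%R]| = #|[set c | (diag h c < 0)%R]|.
  rewrite -[RHS](card_preimset _ (@perm_inj _ s)); apply: eq_card => c.
  by rewrite !inE (act_diag hf hs).
have T2 : #|[set p : 'I_n * 'I_n | [&& val p.2 < val p.1,
              diag (act h s) p.1 == (diag (act h s) p.2 + 1)%R
            & col (act h s) p.1 < col (act h s) p.2]]| =
          #|[set p : 'I_n * 'I_n | [&& val p.2 < val p.1,
              diag h p.1 == (diag h p.2 + 1)%R & col h p.1 < col h p.2]]|.
  rewrite -[RHS](card_preimset _ pmi); apply: eq_card => [[a b]].
  rewrite !inE /= (act_diag hf hs a) (act_diag hf hs b) (act_col h s a) (act_col h s b).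
  case: (eqVneq (diag h (s a)) (diag h (s b) + 1)%R) => ed; rewrite ?andbF //=.
  have nsb : ~~ SB b a.
    apply/negP => hsb; have hsb' : SB (s b) (s a) by rewrite G_SB2.
    have := SB_diag hf hsb'; move: ed; mlia.
  by have := G_lt hs nsb; vnorm => ->.
set A := fun g : {ffun 'I_n -> 'I_n} => [set p : 'I_n * 'I_n |
   [&& diag g p.1 == diag g p.2, col g p.1 < col g p.2 & val p.1 < val p.2]].
set SBs := [set p : 'I_n * 'I_n | SB p.1 p.2].
have T1 : #|A (act h s)| = #|A h| + invnum s.
  rewrite -(cardsID SBs (A (act h s))) -(cardsID SBs (A h)).
  have e1 : A (act h s) :\: SBs = pm @^-1: (A h :\: SBs).
    apply/setP => [[a b]]; rewrite !inE /= (G_SB2 _ _ hs).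
    case: (boolP (SB a b)) => hsb; rewrite ?andbF //=.
    rewrite (act_diag hf hs a) (act_diag hf hs b) (act_col h s a) (act_col h s b).
    by have := G_lt hs hsb; vnorm => ->.
  have e2 : A h :&: SBs = set0.
    apply/setP => [[a b]]; rewrite !inE /=.
    case: (boolP (SB a b)) => hsb; rewrite ?andbF //=.
    case: (boolP (val a < val b)) => hab; rewrite ?andbF //=.
    by have := canonP hc hsb hab; rewrite andbT; mlia.
  have e3 : A (act h s) :&: SBs = [set p : 'I_n * 'I_n | (val p.1 < val p.2) && (val (s p.2) < val (s p.1))].
    apply/setP => [[a b]].
    rewrite !inE /= (act_diag hf hs a) (act_diag hf hs b) (act_col h s a) (act_col h s b).
    case: (boolP (SB a b)) => hsb; last first.
      rewrite andbF; case: (boolP (val a < val b)) => hab //=.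
      by have := G_lt hs hsb; move: hab; mlia.
    have hsb' : SB (s a) (s b) by rewrite G_SB2.
    rewrite andbT (SB_diag hf hsb') eqxx /=.
    case: (boolP (val a < val b)) => hab; rewrite ?andbF ?andbT //=.
    have hsab : SB (s a) (s b) by rewrite G_SB2.
    have nab : s a != s b by rewrite (inj_eq (@perm_inj _ s)); apply/eqP => e; move: hab; rewrite e ltnn.
    case: (ltngtP (val (s a)) (val (s b))) => hc2.
    - by have := canonP hc hsab hc2; mlia.
    - by have := canonP hc (SB_sym hsab) hc2.
    - by move: nab; rewrite -val_eqE hc2 eqxx.
  rewrite e1 card_preimset // e2 cards0 e3 /invnum; mlia.
have T1' : #|[set p : 'I_n * 'I_n | [&& diag (act h s) p.1 == diag (act h s) p.2,
    col (act h s) p.1 < col (act h s) p.2 & val p.1 < val p.2]]| =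
  #|[set p : 'I_n * 'I_n | [&& diag h p.1 == diag h p.2,
    col h p.1 < col h p.2 & val p.1 < val p.2]]| + invnum s := T1.
rewrite T1' T2 T3 -!addnA; congr (_ + _); by rewrite addnC -addnA.
Qed.
Lemma mem_ides (w : seq nat) i : (i \in ides w) = (0 < i < size w) && (index i.+1 w < index i w).
Proof.
rewrite /ides mem_filter mem_iota andbC; congr (_ && _); apply/idP/idP; lia.
Qed.

Lemma labidx (x : seq 'I_n) c : index (val c).+1 (labels x) = index c x.
Proof.
rewrite /labels (@index_map _ _ (fun c : 'I_n => (val c).+1)) //.
by move=> u v /eqP; rewrite eqSS => /eqP; apply: val_inj.
Qed.

Lemma size_sw f : size (sigword f) = size (diagword f).
Proof.
rewrite /sigword /diagword !size_flatten /shape -!map_comp; congr sumn.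
by apply: eq_map => d /=; rewrite size_sort.
Qed.

Lemma idx_oneline (p : 'S_n) c : index c (oneline p) = val ((p^-1)%g c).
Proof.
rewrite -{1}(permKV p c) /oneline index_map ?index_enum_ord //; exact: perm_inj.
Qed.

Lemma ides_lab (x : seq 'I_n) a b : size x = n -> val b = (val a).+1 ->
  (val b \in ides (labels x)) = (index b x < index a x).
Proof.
move=> sx eb; rewrite mem_ides size_map sx (labidx x b) eb (labidx x a) -eb.
by rewrite ltn_ord eb.
Qed.

Lemma ides_act h s : diagword h = ww -> canon h -> s \in GG -> forall a b, val b = (val a).+1 ->
  (val b \in ides (labels (sigword (act h s)))) =
  (val b \in ides (labels ww) ++ ides (labels (oneline (s^-1)%g))).
Proof.
move=> hf hc hs a b eb.
have hg : diagword (act h s) = ww by rewrite act_dw.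
rewrite mem_cat (ides_lab _ eb); last by rewrite size_sw hg w_size.
rewrite (ides_lab _ eb); last exact: w_size.
rewrite (ides_lab _ eb); last by rewrite /oneline size_map size_enum_ord.
rewrite (idx_oneline (s^-1)%g b) (idx_oneline (s^-1)%g a) invgK.
have nba : b != a by apply/eqP => e; move: eb; rewrite e; mlia.
rewrite (sw_lt _ nba) (dwl hg nba) (act_col h s a) (act_col h s b).
have ltab : val a < val b by mlia.
have -> : (val b < val a) = false by apply/negbTE; rewrite -leqNgt ltnW.
rewrite andbF orbF.
case: (eqVneq (diag (act h s) b) (diag (act h s) a)) => ed.
  have hK : Kn a by apply: (C2 hg eb); rewrite ed.
  have hsab : SB (s a) (s b) by rewrite G_SB2 //; exact: SB_K.
  have nab : s a != s b by rewrite (inj_eq (@perm_inj _ s)) eq_sym.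
  rewrite ed andTb Order.POrderTheory.ltxx /=.
  case: (ltngtP (val (s a)) (val (s b))) => hc2.
  - have := canonP hc hsab hc2; mlia.
  - have := canonP hc (SB_sym hsab) hc2; mlia.
  - by move: nab; rewrite -val_eqE hc2 eqxx.
rewrite andFb orbF.
have nsb : ~~ SB a b.
  apply/negP => hsb; move: ed; rewrite (act_diag hf hs a) (act_diag hf hs b).
  have hsab : SB (s a) (s b) by rewrite G_SB2.
  by rewrite (SB_diag hf hsab) eqxx.
have := G_lt hs nsb; rewrite ltab => /esym hl.
have -> : (val (s b) < val (s a)) = false by apply/negbTE; rewrite -leqNgt ltnW.
by rewrite orbF.
Qed.

Lemma incr_perm (r : 'S_n) : (forall a b, val a < val b -> val (r a) < val (r b)) -> r = 1%g.
Proof.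
move=> hr.
have up : forall (p : 'S_n), (forall a b, val a < val b -> val (p a) < val (p b)) ->
    forall c, val c <= val (p c).
  move=> p hp.
  have : forall m c, val c = m -> m <= val (p c).
    elim=> [//|m IH] c ec.
    have hm : m < n by have := ltn_ord c; mlia.
    have := IH (Ordinal hm) erefl; have := hp (Ordinal hm) c; rewrite /= ec => h1 h2.
    by have := h1 (ltnSn m); mlia.
  by move=> h c; apply: h.
have rinv : forall a b, val a < val b -> val ((r^-1)%g a) < val ((r^-1)%g b).
  move=> a b hab; rewrite ltnNge leq_eqVlt; apply/negP => /orP [/eqP e|h].
    have e' : (r^-1)%g b = (r^-1)%g a by apply: val_inj.
    by move: hab; rewrite -(permKV r a) -(permKV r b) e' ltnn.
  by have := hr _ _ h; rewrite !permKV; mlia.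
apply/permP => c; rewrite perm1; apply: val_inj; apply/eqP; rewrite eqn_leq.
rewrite up // andbT.
have := up _ rinv (r c); rewrite permK; done.
Qed.

Lemma canon_unique h r : diagword h = ww -> canon h -> canon (act h r) -> r \in GG -> r = 1%g.
Proof.
move=> hf hc hc' hr; apply: incr_perm => a b hab.
case: (boolP (SB a b)) => hsb; last by rewrite -G_lt.
have := canonP hc' hsb hab; rewrite !act_col => hcol.
have hsab : SB (r a) (r b) by rewrite G_SB2.
case: (ltngtP (val (r a)) (val (r b))) => // hc2.
  by have := canonP hc (SB_sym hsab) hc2; mlia.
have e : r a = r b by apply: val_inj.
by move: hab; rewrite (perm_inj e) ltnn.
Qed.

Definition bad g := [set p : 'I_n * 'I_n | [&& SB p.1 p.2, val p.1 < val p.2 & col g p.1 < col g p.2]].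

Lemma not_canon_adj g : diagword g = ww -> ~~ canon g ->
  exists a, exists b, [/\ val b = (val a).+1, Kn a & col g a < col g b].
Proof.
move=> hg /forallPn [c] /forallPn [d]; rewrite negb_imply => /andP [/andP [hsb hcd] hcol].
have ncd : c != d by apply/eqP => e; move: hcd; rewrite e ltnn.
have hne := diag_col_neq ncd (SB_diag hg hsb).
have hlt : col g c < col g d by move: hcol hne; mlia.
move/SBP: hsb => hK.
have : forall m c d, val d = val c + m -> (forall k, val c <= k < val d -> Kn k) ->
    col g c < col g d -> exists a, exists b, [/\ val b = (val a).+1, Kn a & col g a < col g b].
  elim=> [|m IH] c1 d1 e hk hl.
    have e' : d1 = c1 by apply: val_inj; rewrite e addn0.
    by move: hl; rewrite e' ltnn.
  have hc : (val c1).+1 < n by have := ltn_ord d1; mlia.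
  case: (ltnP (col g c1) (col g (Ordinal hc))) => h.
    exists c1, (Ordinal hc); split => //; apply: hk; mlia.
  apply: (IH (Ordinal hc) d1) => /=; first by mlia.
    by move=> k hk2; apply: hk; mlia.
  exact: leq_ltn_trans h hl.
move=> /(_ (val d - val c) c d); apply; first by mlia.
  by move=> k hk2; apply: hK; mlia.
exact: hlt.
Qed.

Lemma tperm_lt a b x y : val b = (val a).+1 -> val x < val y -> ~~ ((x == a) && (y == b)) ->
  val (tperm a b x) < val (tperm a b y).
Proof.
move=> eb hxy hn.
case: (tpermP a b x) => [ex|ex|nx1 nx2]; case: (tpermP a b y) => [ey|ey|ny1 ny2];
  rewrite ?ex ?ey in hxy hn *; rewrite ?eqxx /= in hn; try mlia.
- have : val y != val a by apply/negP => /eqP e; apply: ny1; apply: val_inj.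
  have : val y != val b by apply/negP => /eqP e; apply: ny2; apply: val_inj.
  mlia.
- have : val x != val a by apply/negP => /eqP e; apply: nx1; apply: val_inj.
  have : val x != val b by apply/negP => /eqP e; apply: nx2; apply: val_inj.
  mlia.
Qed.
Lemma bad_dec g a b : val b = (val a).+1 -> Kn a -> col g a < col g b ->
  #|bad (act g (tperm a b))| < #|bad g|.
Proof.
move=> eb hK hab.
have ht : tperm a b \in GG by apply: G_tperm.
pose pm := fun p : 'I_n * 'I_n => (tperm a b p.1, tperm a b p.2).
have pmi : injective pm by move=> [x y] [x' y'] [/perm_inj -> /perm_inj ->].
have inab : (a, b) \in bad g.
  by rewrite inE /= SB_K // hab eb ltnSn.
rewrite -(card_imset _ pmi) (cardsD1 (a, b) (bad g)) inab add1n ltnS.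
apply: subset_leq_card; apply/subsetP => q /imsetP [[x y] hp ->].
rewrite !inE /= in hp *; case/and3P: hp => hsb hxy hcol.
rewrite !act_col in hcol.
have nxy : ~~ ((x == a) && (y == b)).
  apply/negP => /andP [/eqP ex /eqP ey]; move: hcol; rewrite ex ey tpermL tpermR; mlia.
apply/andP; split.
  rewrite xpair_eqE; apply/negP => /andP [/eqP e1 /eqP e2].
  have ex : x = b by rewrite -(tpermK a b x) e1 tpermL.
  have ey : y = a by rewrite -(tpermK a b y) e2 tpermR.
  by move: hxy; rewrite ex ey; mlia.
by rewrite G_SB2 // hsb tperm_lt.
Qed.

Lemma exists_canon f : diagword f = ww -> exists2 s, s \in GG & canon (act f s).
Proof.
move=> hf.
case: (@arg_minnP _ 1%g (fun s => s \in GG) (fun s => #|bad (act f s)|) G1) => s hs hmin.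
exists s => //; apply/negPn/negP => hnc.
have hg : diagword (act f s) = ww by rewrite act_dw.
have [a [b [eb hK hcol]]] := not_canon_adj hg hnc.
have := bad_dec eb hK hcol; rewrite act_comp.
have := hmin (tperm a b * s)%g (GM (G_tperm eb hK) hs).
by move=> h1 h2; have := leq_ltn_trans h1 h2; rewrite ltnn.
Qed.

Definition Fib l := [set f : {ffun 'I_n -> 'I_n} | (diagword f == ww) && (dev f == l)].
Definition Can l := [set h | (h \in Fib l) && canon h].

Lemma sum_fib (R : nmodType) l (H : {ffun 'I_n -> 'I_n} -> R) :
  (\sum_(f | (diagword f == ww) && (dev f == l)) H f =
  \sum_(h in Can l) \sum_(s in GG) H (act h s))%R.
Proof.
pose S := [set p : {ffun 'I_n -> 'I_n} * 'S_n | (p.1 \in Can l) && (p.2 \in GG)].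
pose Phi := fun p : {ffun 'I_n -> 'I_n} * 'S_n => act p.1 p.2.
have inj : {in S &, injective Phi}.
  move=> [h s] [h' s']; rewrite /S inE /= => /andP [hh hs].
  rewrite inE /= => /andP [hh' hs'] e.
  rewrite /Phi /= in e.
  move: hh hh'; rewrite /Can /Fib !inE -!andbA => /and3P [/eqP hf _ hc] /and3P [/eqP hf' _ hc'].
  have eh : h = act h' (s^-1 * s')%g by rewrite -act_comp -e act_comp mulVg act1.
  have hr : (s^-1 * s')%g \in GG by apply: GM => //; apply: GV.
  have hc2 : canon (act h' (s^-1 * s')%g) by rewrite -eh.
  have er := canon_unique hf' hc' hc2 hr.
  have es : s' = s by rewrite -[s'](mulVKg s) er mulg1.
  by rewrite eh er act1 es.
have img : Phi @: S = Fib l.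
  apply/setP => f; apply/imsetP/idP.
    move=> [[h s]]; rewrite /S inE /= => /andP [hh hs] ->.
    move: hh; rewrite /Can /Fib !inE => /andP [/andP [/eqP hf /eqP hd] hc].
    by rewrite /Phi /= act_dw // act_dev // hf hd !eqxx.
  rewrite /Fib inE => /andP [/eqP hf /eqP hd].
  have [s hs hc] := exists_canon hf.
  exists (act f s, (s^-1)%g).
    by rewrite /S inE /= GV // andbT /Can inE /Fib inE act_dw // act_dev // hf hd !eqxx hc.
  by rewrite /Phi /= act_comp mulVg act1.
transitivity (\sum_(f in Fib l) H f)%R.
  by apply: eq_bigl => f; rewrite /Fib inE.
rewrite -img big_imset //= pair_big /=.
by apply: eq_bigl => p; rewrite /S inE.
Qed.

Lemma sumG_inv (R : nmodType) (G : 'S_n -> R) :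
  (\sum_(s in GG) G (s^-1)%g = \sum_(s in GG) G s)%R.
Proof.
rewrite [RHS](reindex_inj invg_inj) /=; apply: eq_bigl => s.
apply/idP/idP => h; first exact: GV.
by rewrite -(invgK s); exact: GV.
Qed.

Lemma Qeval_ext (R : comNzRingType) m N S S' (x : 'I_N -> R) :
  (forall i, 0 < i < m -> (i \in S) = (i \in S')) -> Qeval m S x = Qeval m S' x.
Proof.
move=> h; rewrite /Qeval; apply: eq_bigl => a; rewrite /Qadm; apply: eq_in_all => i.
by rewrite mem_iota => hi /=; rewrite h //; lia.
Qed.
Lemma main_id (F : fieldType) (l N : nat) (q t : F) (x : 'I_N -> F) :
  (\sum_(pi in GG) q ^+ invnum pi != 0)%R ->
  (\sum_(f : {ffun 'I_n -> 'I_n} | (diagword f == ww) && (dev f == l))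
      t ^+ area f * q ^+ dinv f * Qeval n (ides (labels (sigword f))) x)%R
  = ((\sum_(f : {ffun 'I_n -> 'I_n} | (diagword f == ww) && (dev f == l))
        t ^+ area f * q ^+ dinv f)
     * ((\sum_(pi in GG) q ^+ invnum pi
           * Qeval n (ides (labels ww) ++ ides (labels (oneline pi))) x)
        / (\sum_(pi in GG) q ^+ invnum pi)))%R.
Proof.
move=> hC.
pose Bf := fun pi : 'S_n => (q ^+ invnum pi * Qeval n (ides (labels ww) ++ ides (labels (oneline pi))) x)%R.
pose Cf := fun pi : 'S_n => (q ^+ invnum pi)%R.
have eB : (\sum_(pi in GG) Bf pi = \sum_(s in GG) Bf (s^-1)%g)%R by rewrite sumG_inv.
have eq1 : forall h, h \in Can l ->
   (\sum_(s in GG) t ^+ area (act h s) * q ^+ dinv (act h s)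
       * Qeval n (ides (labels (sigword (act h s)))) x
    = (t ^+ area h * q ^+ dinv h) * \sum_(pi in GG) Bf pi)%R.
  move=> h; rewrite /Can /Fib !inE -!andbA => /and3P [/eqP hf _ hc].
  rewrite eB big_distrr /=; apply: eq_bigr => s hs.
  rewrite (act_area hf hs) (dinv_act hf hc hs) -invnumV exprD.
  rewrite (@Qeval_ext _ n _ _ (ides (labels ww) ++ ides (labels (oneline (s^-1)%g)))); last first.
    move=> i hi; have ha : i.-1 < n by lia.
    have hb : i < n by lia.
    have e : i = i.-1.+1 by lia.
    exact: (@ides_act h s hf hc hs (Ordinal ha) (Ordinal hb) e).
  by rewrite /Bf !mulrA.
have eq2 : forall h, h \in Can l ->
   (\sum_(s in GG) t ^+ area (act h s) * q ^+ dinv (act h s)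
    = (t ^+ area h * q ^+ dinv h) * \sum_(pi in GG) Cf pi)%R.
  move=> h; rewrite /Can /Fib !inE -!andbA => /and3P [/eqP hf _ hc].
  rewrite big_distrr /=; apply: eq_bigr => s hs.
  rewrite (act_area hf hs) (dinv_act hf hc hs) exprD.
  by rewrite /Cf !mulrA.
rewrite !sum_fib (eq_bigr _ eq1) (eq_bigr _ eq2) -!big_distrl /=.
move: hC; rewrite -/(Cf _).
set X := (\sum_(i in Can l) _)%R.
set B := (\sum_(pi in GG) Bf pi)%R.
set C := (\sum_(pi in GG) Cf pi)%R.
move=> hC.
by rewrite [(B / C)%R]mulrC mulrA -(mulrA X) mulfV // mulr1.
Qed.
End Fiber.

Theorem lemma4p1 (F : fieldType) (n l : nat) (tau : 'S_n) (N : nat)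
    (q t : F) (x : 'I_N -> F) :
  l.+1 <= nruns (labels (oneline tau)) ->
  (\sum_(pi in Yconsec tau) q ^+ invnum pi != 0)%R ->
  (\sum_(f : {ffun 'I_n -> 'I_n} | (diagword f == oneline tau) && (dev f == l))
      t ^+ area f * q ^+ dinv f * Qeval n (ides (labels (sigword f))) x)%R
  = ((\sum_(f : {ffun 'I_n -> 'I_n} | (diagword f == oneline tau) && (dev f == l))
        t ^+ area f * q ^+ dinv f)
     * ((\sum_(pi in Yconsec tau)
           q ^+ invnum pi
           * Qeval n (ides (labels (oneline tau)) ++ ides (labels (oneline pi))) x)
        / (\sum_(pi in Yconsec tau) q ^+ invnum pi)))%R.
Proof.
move=> _ hC.
exact: (@main_id n tau F l N q t x hC).
Qed.
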